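(* Let $n\ge1$, $\mathcal{T}=\{v\in\mathbb{R}^{n+1}: v^0,\dots,v^n>0\}$ and $F:\mathcal{T}\to(0,\infty)$, $F(v)=(v^0v^1\cdots v^n)^{1/(n+1)}$. Then for every $v\in\mathcal{T}$ the matrix $g_{ij}(v)=\frac12\partial_i\partial_j(F^2)(v)$ has Lorentzian signature $(+,-,\dots,-)$, and the fundamental inequality $\frac{\partial F}{\partial v^i}(v)w^i\ge F(w)$ for all $v,w\in\mathcal{T}$ is equivalent to the arithmetic–geometric mean inequality $$\frac{a_0+a_1+\dots+a_n}{n+1}\ge (a_0a_1\cdots a_n)^{1/(n+1)}\quad\text{for all } a_0,\dots,a_n>0,$$ which therefore holds.
   Context: Summation convention over repeated indices $i=0,\dots,n$. *)

(* Defs.v *)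
From HB Require Import structures.
From mathcomp Require Import all_boot all_order all_algebra.
From mathcomp Require Import all_classical all_reals all_analysis.
Set Implicit Arguments. Unset Strict Implicit. Unset Printing Implicit Defensive.
Import Order.TTheory GRing.Theory Num.Theory.
Import numFieldNormedType.Exports.
Local Open Scope ring_scope.

Definition posCone (R : realType) (n : nat) (v : 'rV[R]_(n.+1)) : Prop :=
  forall i : 'I_n.+1, 0 < v 0 i.

(* F(v) = (v^0 v^1 ... v^n)^{1/(n+1)}  (only its values on the open cone matter). *)
Definition Fgm (R : realType) (n : nat) (v : 'rV[R]_(n.+1)) : R :=
  (\prod_(i < n.+1) v 0 i) `^ (n.+1%:R)^-1.

Definition ebasis (R : realType) (n : nat) (i : 'I_n.+1) : 'rV[R]_(n.+1) :=
  delta_mx 0 i.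

Definition pder (R : realType) (n : nat) (f : 'rV[R]_(n.+1) -> R)
  (i : 'I_n.+1) (v : 'rV[R]_(n.+1)) : R :=
  'D_(ebasis R i) f v.

Definition gmetric (R : realType) (n : nat) (v : 'rV[R]_(n.+1)) : 'M[R]_(n.+1) :=
  \matrix_(i, j) (2^-1 * pder (pder (fun u => Fgm u ^+ 2) j) i v).

Definition lorentzian_signature (R : realType) (n : nat) (g : 'M[R]_(n.+1)) : Prop :=
  exists P : 'M[R]_(n.+1), P \in unitmx /\
    P^T *m g *m P = diag_mx (\row_(i < n.+1) (if i == ord0 then 1 else -1)).

Definition fundamental_inequality (R : realType) (n : nat) : Prop :=
  forall v w : 'rV[R]_(n.+1), posCone v -> posCone w ->
    \sum_(i < n.+1) pder (@Fgm R n) i v * w 0 i >= Fgm w.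

Definition amgm (R : realType) (n : nat) : Prop :=
  forall a : 'I_n.+1 -> R, (forall i, 0 < a i) ->
    (\sum_(i < n.+1) a i) / n.+1%:R >= (\prod_(i < n.+1) a i) `^ (n.+1%:R)^-1.

(* Main.v *)
Require Import Defs.
From HB Require Import structures.
From mathcomp Require Import all_boot all_order all_algebra.
From mathcomp Require Import all_classical all_reals all_analysis.
From mathcomp Require Import ring lra.
Import Order.TTheory GRing.Theory Num.Theory.
Import numFieldNormedType.Exports.
Local Open Scope ring_scope.

Section S.
Variables (R : realType) (n : nat).
Local Notation V := 'rV[R]_(n.+1).

Lemma dir_derive (f : V -> R) (a v : V) :
  'D_v f a = 'D_1 (fun h : R => f (h *: v + a)) 0.
Proof.
rewrite /derive; do 2 f_equal.
by apply/funext => h /=; rewrite addr0 scale0r add0r [_%:A]mulr1.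
Qed.

Lemma dir_is_derive (f : V -> R) (a v : V) (d : R) :
  is_derive (0:R) 1 (fun h : R => f (h *: v + a)) d -> is_derive a v f d.
Proof.
move=> [H1 H2]; split; first exact/derivable1P.
by rewrite dir_derive.
Qed.

Definition Gpw (r : R) (u : V) : R := (\prod_(i < n.+1) u 0 i) `^ r.

Lemma entry_shift (u : V) (i j : 'I_n.+1) (h : R) :
  (h *: ebasis R i + u) 0 j = u 0 j + (if j == i then h else 0).
Proof.
rewrite !mxE /=; case: (j == i); rewrite ?mulr1 ?mulr0 addrC //.
Qed.

Lemma prod_shift (u : V) (i : 'I_n.+1) (h : R) :
  \prod_(j < n.+1) (h *: ebasis R i + u) 0 j =
  (u 0 i + h) * \prod_(j < n.+1 | j != i) u 0 j.
Proof.
rewrite (bigD1 i) //= entry_shift eqxx; congr (_ * _).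
by apply: eq_bigr => j /negbTE ji; rewrite entry_shift ji addr0.
Qed.

Lemma lin_is_derive (a b x : R) :
  is_derive x 1 (fun h : R => (a + h) * b) b.
Proof.
have H1 : is_derive x (1:R) (cst a + id : R -> R) (0 + 1) by apply: is_deriveD.
have H2 : is_derive x (1:R) ((cst a + id) * cst b : R -> R) ((a + x) *: 0 + b *: (0 + 1)).
  by apply: is_deriveM.
by apply: (is_derive_eq H2); rewrite scaler0 !add0r [_%:A]mulr1.
Qed.

Lemma prod_gt0 (u : V) : posCone u -> 0 < \prod_(j < n.+1) u 0 j.
Proof. by move=> pu; apply: prodr_gt0 => j _; exact: pu. Qed.

Lemma prodQ_gt0 (u : V) (i : 'I_n.+1) : posCone u -> 0 < \prod_(j < n.+1 | j != i) u 0 j.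
Proof. by move=> pu; apply: prodr_gt0 => j _; exact: pu. Qed.

Lemma Gr_is_derive (r : R) (u : V) (i : 'I_n.+1) : posCone u ->
  is_derive (0:R) 1 (fun h : R => Gpw r (h *: ebasis R i + u)) (r * Gpw r u / u 0 i).
Proof.
move=> pu.
set Q := \prod_(j < n.+1 | j != i) u 0 j.
have Q0 : 0 < Q by exact: prodQ_gt0.
have ui0 : 0 < u 0 i by exact: pu.
have E : (fun h : R => Gpw r (h *: ebasis R i + u)) =
   (fun y : R => y `^ r) \o (fun h : R => (u 0 i + h) * Q).
  by apply/funext => h; rewrite /Gpw prod_shift.
rewrite E.
have P : \prod_(j < n.+1) u 0 j = (u 0 i + 0) * Q by rewrite -(prod_shift u i 0) scale0r add0r.
have Hx : 0 < (u 0 i + 0) * Q by rewrite addr0 mulr_gt0.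
have H := @is_derive1_comp R (fun y : R => y `^ r) (fun h : R => (u 0 i + h) * Q) 0 _ _
   (is_derive1_powR r Hx) (lin_is_derive (u 0 i) Q 0).
apply: (is_derive_eq H).
rewrite /Gpw P addr0 powRB; last by apply/implyP => _; rewrite mulf_neq0 ?gt_eqF.
rewrite powRr1 ?mulr_ge0 ?ltW //.
by field; rewrite ?gt_eqF ?powR_gt0 ?mulr_gt0.
Qed.

Lemma pder_Gr (r : R) (u : V) (i : 'I_n.+1) : posCone u ->
  pder (Gpw r) i u = r * Gpw r u / u 0 i.
Proof.
move=> pu; have [_ <-] := @dir_is_derive (Gpw r) u (ebasis R i) _ (Gr_is_derive r u i pu).
by [].
Qed.

Lemma near_cone (v : V) (i : 'I_n.+1) : posCone v ->
  \forall h \near (0:R), posCone (h *: ebasis R i + v).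
Proof.
move=> pv; have vi := pv i.
near=> h => k; rewrite entry_shift.
case: ifP => [/eqP -> | _]; last by rewrite addr0.
have : `|h| < v 0 i by near: h; exists (v 0 i) => //= y /=; rewrite sub0r normrN.
by rewrite ltr_norml => /andP[h1 h2]; lra.
Unshelve. all: by end_near. Qed.

Lemma pder2_Gpw (s : R) (v : V) (i j : 'I_n.+1) : posCone v ->
  pder (pder (Gpw s) j) i v = s * Gpw s v / (v 0 i * v 0 j) * (s - (i == j)%:R).
Proof.
move=> pv.
rewrite {1}/pder dir_derive.
set G := fun h : R => Gpw s (h *: ebasis R i + v).
have HG : is_derive (0:R) 1 G (s * Gpw s v / v 0 i) by exact: Gr_is_derive.
have G0 : G 0 = Gpw s v by rewrite /G scale0r add0r.
have vi := pv i; have vj := pv j.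
rewrite (@near_eq_derive _ _ _ _ (fun h : R => s * G h / (v 0 j + (if j == i then h else 0)))); last first.
  near=> h; rewrite pder_Gr; last by near: h; exact: near_cone.
  by rewrite entry_shift.
case: (eqVneq j i) => [ji | ji].
- subst j.
  have H1 : is_derive (0:R) (1:R) (cst (v 0 i) + id : R -> R) (0 + 1) by apply: is_deriveD.
  have H2 := @is_deriveV R (cst (v 0 i) + id) 0 _ 1 _ H1.
  have H3 : is_derive (0:R) (1:R) (cst s * G : R -> R) (s *: (s * Gpw s v / v 0 i) + G 0 *: 0).
    by apply: is_deriveM.
  have nz : v 0 i + 0 != 0 by rewrite addr0 lt0r_neq0.
  have H4 := is_deriveM H3 (H2 nz).
  rewrite (@derive_val _ _ _ _ _ _ _ H4) /= G0.
  rewrite /GRing.scale /= !fctE /= G0 /cst /=.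
  by field; rewrite gt_eqF.
- rewrite addr0.
  have H3 : is_derive (0:R) (1:R) (cst s * G : R -> R) (s *: (s * Gpw s v / v 0 i) + G 0 *: 0).
    by apply: is_deriveM.
  have H4 : is_derive (0:R) (1:R) ((cst s * G) * cst ((v 0 j)^-1) : R -> R)
     ((s * G 0) *: 0 + (v 0 j)^-1 *: (s *: (s * Gpw s v / v 0 i) + G 0 *: 0)).
    by apply: is_deriveM.
  rewrite (@derive_val _ _ _ _ _ _ _ H4) /= G0.
  rewrite /GRing.scale /=.
  by field; rewrite !gt_eqF.
Unshelve. all: by end_near. Qed.
End S.
Section M.
Variables (R : realType) (n : nat).
Hypothesis hn : (1 <= n)%N.
Local Notation N := n.+1.

Definition tt : R := (Num.sqrt (N%:R : R))^-1.

Lemma N_gt0 : 0 < (N%:R : R). Proof. by rewrite ltr0n. Qed.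

Lemma tt2 : tt * tt = (N%:R)^-1.
Proof.
by rewrite /tt -invfM -expr2 sqr_sqrtr // ler0n.
Qed.

Lemma tt_neq1 : tt != 1.
Proof.
apply/negP => /eqP t1; have := tt2; rewrite t1 mulr1 => /esym/eqP.
by rewrite invr_eq1 pnatr_eq1 => /eqP [] n0; move: hn; rewrite n0.
Qed.

Definition uu : 'cV[R]_N := const_mx tt.
Definition e0 : 'cV[R]_N := delta_mx 0 0.
Definition aa : 'cV[R]_N := e0 - uu.
Definition kk : R := (1 - tt)^-1.
Definition Hm : 'M[R]_N := 1%:M - kk *: (aa *m aa^T).
Definition Mm : 'M[R]_N := 2 *: (uu *m uu^T) - 1%:M.

Lemma uTu : uu^T *m uu = 1%:M.
Proof.
rewrite [LHS]mx11_scalar; congr (_%:M); rewrite !mxE.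
under eq_bigr do rewrite !mxE.
by rewrite sumr_const card_ord tt2 -[_ *+ _]mulr_natr mulVf // pnatr_eq0.
Qed.

Lemma e0Te0 : e0^T *m e0 = 1%:M.
Proof.
rewrite [LHS]mx11_scalar; congr (_%:M); rewrite !mxE.
rewrite (bigD1 0) //= big1 => [|i /negbTE i0]; rewrite !mxE ?i0 ?eqxx //=.
  by rewrite mulr1 addr0.
by rewrite mul0r.
Qed.

Lemma e0Tu : e0^T *m uu = tt%:M.
Proof.
rewrite [LHS]mx11_scalar; congr (_%:M); rewrite !mxE.
rewrite (bigD1 0) //= big1 => [|i /negbTE i0]; rewrite !mxE ?i0 ?eqxx //=.
  by rewrite mul1r addr0.
by rewrite mul0r.
Qed.

Lemma uTe0 : uu^T *m e0 = tt%:M.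
Proof. by rewrite -[uu^T *m e0]trmxK trmx_mul trmxK e0Tu tr_scalar_mx. Qed.

Lemma aTu : aa^T *m uu = (tt - 1)%:M.
Proof. by rewrite /aa linearB /= mulmxBl e0Tu uTu raddfB. Qed.

Lemma aTa : aa^T *m aa = (2 - 2 * tt)%:M.
Proof.
have -> : aa^T = e0^T - uu^T by rewrite /aa linearB.
rewrite /aa mulmxBl !mulmxBr e0Te0 e0Tu uTe0 uTu -!raddfB /=.
congr (_%:M); ring.
Qed.

Lemma Hu : Hm *m uu = e0.
Proof.
rewrite /Hm mulmxBl mul1mx -scalemxAl -mulmxA aTu mul_mx_scalar scalerA.
have -> : kk * (tt - 1) = -1.
  rewrite /kk; field; rewrite subr_eq0 eq_sym; exact: tt_neq1.
by rewrite scaleN1r opprK /aa addrC subrK.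
Qed.

Lemma HT : Hm^T = Hm.
Proof. by rewrite /Hm linearB /= linearZ /= trmx1 trmx_mul trmxK. Qed.

Lemma HH : Hm *m Hm = 1%:M.
Proof.
set A := aa *m aa^T.
have AA : A *m A = (2 - 2 * tt) *: A.
  by rewrite /A mulmxA -[aa *m aa^T *m aa]mulmxA aTa mul_mx_scalar -scalemxAl.
rewrite /Hm -/A mulmxBl mul1mx mulmxBr mulmx1 -scalemxAl -scalemxAr AA.
rewrite !scalerA opprB addrA.
have -> : kk * kk * (2 - 2 * tt) = kk + kk.
  rewrite /kk; field; rewrite subr_eq0 eq_sym; exact: tt_neq1.
by rewrite scalerDl addrA addrK subrK.
Qed.

Lemma HMH : Hm^T *m Mm *m Hm = 2 *: (e0 *m e0^T) - 1%:M.
Proof.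
have uH : uu^T *m Hm = e0^T by rewrite -{1}HT -trmx_mul Hu.
rewrite HT /Mm (mulmxBr Hm) (mulmx1 Hm) (mulmxBl _ Hm Hm) HH.
rewrite -(scalemxAr 2 Hm) -(scalemxAl 2 _ Hm).
by rewrite (mulmxA Hm uu) -(mulmxA (Hm *m uu)) uH Hu.
Qed.

Lemma diagE : 2 *: (e0 *m e0^T) - 1%:M =
  diag_mx (\row_(i < N) (if i == ord0 then 1 else -1) : 'rV[R]_N).
Proof.
apply/matrixP => i j; rewrite !mxE big_ord1 !mxE.
have -> : (ord0 == 0 :> 'I_1) = true by [].
rewrite !andbT.
have E : forall k : 'I_N, (k == 0) = (k == ord0) by [].
rewrite !E.
case: (eqVneq i j) => [<- | ij].
  by case: (i == ord0); rewrite /= ?mulr1n ?mulr0n; lra.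
rewrite mulr0n subr0.
case: (eqVneq i ord0) => [ei | ni].
  by subst i; rewrite eq_sym (negbTE ij) /= mulr0n !mulr0.
by rewrite ?(negbTE ni) /= mul0r mulr0 mulr0n.
Qed.

End M.

Section L.
Variables (R : realType) (n : nat).
Hypothesis hn : (1 <= n)%N.
Local Notation N := n.+1.

Lemma Fgm2 : (fun u : 'rV[R]_N => Fgm u ^+ 2) = @Gpw R n ((N%:R)^-1 * 2).
Proof.
by apply/funext => u; rewrite /Fgm /Gpw powRrM powR_mulrn // powR_ge0.
Qed.

Lemma scal2 (a b : R) (A B : 'M[R]_N) :
  (a *: A) *m (b *: B) = (a * b) *: (A *m B).
Proof. by rewrite -scalemxAl -scalemxAr scalerA. Qed.

Lemma scal3 (a b c : R) (A B C : 'M[R]_N) :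
  (a *: A) *m (b *: B) *m (c *: C) = (a * b * c) *: (A *m B *m C).
Proof. by rewrite !scal2. Qed.

Lemma lorentz (v : 'rV[R]_N) : posCone v -> lorentzian_signature (gmetric v).
Proof.
move=> pv.
set s : R := (N%:R)^-1 * 2.
set G := @Gpw R n s v.
have G0 : 0 < G by rewrite /G /Gpw powR_gt0 // prod_gt0.
set c := G / N%:R.
have c0 : 0 < c by rewrite /c divr_gt0 // ltr0n.
set D := diag_mx (\row_(i < N) v 0 i).
set Di := diag_mx (\row_(i < N) (v 0 i)^-1).
have vn0 : forall i, v 0 i != 0 by move=> i; rewrite gt_eqF // pv.
have DDi : D *m Di = 1%:M.
  apply/matrixP => i j; rewrite /D mul_diag_mx !mxE.
  by case: (i == j); rewrite ?mulr1n ?mulr0n ?mulr0 // mulfV.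
have DiD : Di *m D = 1%:M.
  apply/matrixP => i j; rewrite /D mul_diag_mx !mxE.
  by case: (i == j); rewrite ?mulr1n ?mulr0n ?mulr0 // mulVf.
have gE : gmetric v = c *: (Di *m Mm R n *m Di).
  apply/matrixP => i j.
  rewrite /gmetric Fgm2 mul_mx_diag mul_diag_mx !mxE pder2_Gpw // big_ord1 !mxE.
  rewrite (tt2 R n) -/s -/G /c.
  by case: (i == j); rewrite ?mulr1n ?mulr0n /s; field; rewrite !vn0 /= addrC natr1 pnatr_eq0.
pose P : 'M[R]_N := (Num.sqrt c)^-1 *: (D *m Hm R n). exists P.
have sc0 : 0 < Num.sqrt c by rewrite sqrtr_gt0.
split.
  rewrite /P unitmxZ; last by rewrite unitfE invr_eq0 gt_eqF.
  rewrite unitmx_mul; apply/andP; split.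
    by rewrite unitmxE det_diag unitfE; apply/prodf_neq0 => i _; rewrite mxE vn0.
  by case: (mulmx1_unit (HH R n hn)).
rewrite /P gE [(_ *: _)^T]linearZ /= trmx_mul tr_diag_mx -/D scal3.
rewrite !mulmxA -(mulmxA _ D Di) DDi mulmx1 -(mulmxA _ Di D) DiD mulmx1.
have -> : (Num.sqrt c)^-1 * c * (Num.sqrt c)^-1 = 1.
  rewrite -{2}(sqr_sqrtr (ltW c0)); field; exact: lt0r_neq0.
by rewrite scale1r (HMH R n hn) diagE.
Qed.
End L.

Lemma sum_gt0 (R : realType) (n : nat) (a : 'I_n.+1 -> R) :
  (forall i, 0 < a i) -> 0 < \sum_(i < n.+1) a i.
Proof.
move=> ha; rewrite (bigD1 ord0) //=.
apply: (lt_le_trans (ha ord0)); rewrite lerDl.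
by apply: sumr_ge0 => i _; exact: ltW.
Qed.

Lemma amgm_holds (R : realType) (n : nat) : amgm R n.
Proof.
move=> a ha.
set N := n.+1.
have N0 : (0 : R) < N%:R by rewrite ltr0n.
set A := (\sum_(i < N) a i) / N%:R.
have A0 : 0 < A by rewrite /A divr_gt0 // (@sum_gt0 R n a ha).
have lnle : forall i, ln (a i / A) <= a i / A - 1.
  move=> i; have := expR_ge1Dx (ln (a i / A)).
  have q : 0 < a i / A by rewrite divr_gt0.
  by rewrite lnK ?posrE // => h; lra.
have sumle : \sum_(i < N) ln (a i / A) <= 0.
  apply: (le_trans (ler_sum _ (fun i _ => lnle i))).
  rewrite sumrB sumr_const card_ord -mulr_suml /A.

  have S0 := @sum_gt0 R n a ha.
  have -> : (\sum_(i < n.+1) a i) / ((\sum_(i < N) a i) / N%:R) = N%:R.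
    by field; rewrite ?(lt0r_neq0 S0) ?(lt0r_neq0 N0).
  by rewrite subrr.
have prodle : \prod_(i < N) (a i / A) <= 1.
  have -> : \prod_(i < N) (a i / A) = expR (\sum_(i < N) ln (a i / A)).
    rewrite expR_sum; apply: eq_bigr => i _; rewrite lnK // posrE divr_gt0 //.
  by rewrite -expR0 ler_expR.
have P0 : 0 <= \prod_(i < N) a i by apply: prodr_ge0 => i _; exact: ltW.
have pl : \prod_(i < N) a i <= A ^+ N.
  move: prodle; rewrite prodf_div prodr_const card_ord ler_pdivrMr ?exprn_gt0 //.
  by rewrite mul1r.
have Ni : (0:R) <= (N%:R)^-1 by rewrite invr_ge0 ltW.
have Pn : \prod_(i < N) a i \is Num.nneg by rewrite nnegrE.
have An : A ^+ N \is Num.nneg by rewrite nnegrE exprn_ge0 // ltW.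
have H := @ge0_ler_powR R (N%:R^-1) Ni _ _ Pn An pl.
apply: (le_trans H).
have E : (A ^+ N) `^ (N%:R)^-1 = A.
  by rewrite -powR_mulrn ?ltW // -powRrM mulfV ?gt_eqF // powRr1 // ltW.
by rewrite E.
Qed.

Lemma powRV (R : realType) (x p : R) : 0 < x -> (x^-1) `^ p = (x `^ p)^-1.
Proof.
move=> x0.
have : (x * x^-1) `^ p = x `^ p * (x^-1) `^ p by rewrite powRM // ltW // invr_gt0.
rewrite mulfV ?gt_eqF // powR1 => h.
have xp : 0 < x `^ p by rewrite powR_gt0.
by apply: (mulfI (lt0r_neq0 xp)); rewrite -h mulfV // lt0r_neq0.
Qed.

Lemma fund_holds (R : realType) (n : nat) : fundamental_inequality R n.
Proof.
move=> v w pv pw.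
set N := n.+1.
set p : R := (N%:R)^-1.
have N0 : (0 : R) < N%:R by rewrite ltr0n.
have FE : @Fgm R n = Gpw R n p by [].
rewrite FE.
have Gv : 0 < Gpw R n p v by rewrite /Gpw powR_gt0 // prod_gt0.
have vn0 : forall i, v 0 i != 0 by move=> i; rewrite lt0r_neq0 // pv.
have -> : \sum_(i < N) pder (Gpw R n p) i v * w 0 i =
          Gpw R n p v * ((\sum_(i < N) w 0 i / v 0 i) / N%:R).
  rewrite mulr_suml mulr_sumr; apply: eq_bigr => i _.
  rewrite pder_Gr // /p; field; rewrite vn0 /= lt0r_neq0 //.
have H := @amgm_holds R n (fun i => w 0 i / v 0 i) (fun i => divr_gt0 (pw i) (pv i)).
rewrite /= in H.
apply: le_trans (ler_wpM2l (ltW Gv) H).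
rewrite prodf_div powRM; last 2 first.
- by apply: prodr_ge0 => i _; exact: ltW.
- by rewrite invr_ge0; apply: prodr_ge0 => i _; exact: ltW.
rewrite powRV ?prod_gt0 // -/p.
rewrite /Gpw mulrC -mulrA mulVf ?mulr1 //.
by rewrite lt0r_neq0 // powR_gt0 // prod_gt0.
Qed.

Theorem mainTheorem7 (R : realType) (n : nat) (hn : (1 <= n)%N) :
  (forall v : 'rV[R]_(n.+1), posCone v -> lorentzian_signature (gmetric v))
  /\ (fundamental_inequality R n <-> amgm R n)
  /\ amgm R n.
Proof.
split; first by move=> v pv; exact: (@lorentz R n hn v pv).
split; last exact: amgm_holds.
by split=> _; [exact: amgm_holds | exact: fund_holds].
Qed.
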